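(* Let $a_0,b_0,C_0,C_1,g_3,z_0$ be complex constants with $b_0\neq0$, put $$g_2=\frac{C_0^2+24C_1b_0}{12b_0^2},$$ and let $R(z)=\wp(z-z_0;g_2,g_3)$. Then the function $$y(z)=-\frac{C_0}{12b_0}+R(z)$$ is a solution of the third order ordinary differential equation $$a_0y_{zzz}-12a_0yy_z+b_0y_{zz}-\frac{a_0C_0}{b_0}y_z-6b_0y^2-C_0y+C_1=0 .$$
   Context: $\wp(z;g_2,g_3)$ denotes the Weierstrass elliptic function with invariants $g_2,g_3$, the general solution (up to translation of $z$) of $R_z^2-4R^3+g_2R+g_3=0$; subscripts $z$ denote derivatives with respect to $z$. *)

(* Defs.v *)
From Stdlib Require Import Reals.
From Coquelicot Require Export Coquelicot.
Open Scope C_scope.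

Definition Cderiv (f : C -> C) (z l : C) : Prop :=
  @is_derive C_AbsRing C_NormedModule f z l.

Definition Copen (D : C -> Prop) : Prop := @open C_UniformSpace D.

Definition Cconnected (D : C -> Prop) : Prop :=
  forall U V : C -> Prop, Copen U -> Copen V ->
    (forall z, D z -> U z \/ V z) ->
    (exists z, D z /\ U z) -> (exists z, D z /\ V z) ->
    exists z, D z /\ U z /\ V z.

(* P is (a branch on the domain D of) the Weierstrass function wp(z; g2, g3):
   a non-constant holomorphic solution on the open connected set D of
   P_z^2 = 4 P^3 - g2 P - g3.  P' is its derivative. *)
Definition is_wp_on (g2 g3 : C) (D : C -> Prop) (P P' : C -> C) : Prop :=
  Copen D /\ Cconnected D /\ (exists z, D z) /\
  (forall z, D z -> Cderiv P z (P' z)) /\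
  (exists z1 z2, D z1 /\ D z2 /\ P z1 <> P z2) /\
  (forall z, D z -> P' z * P' z = 4 * (P z * P z * P z) - g2 * P z - g3).

(* Main.v *)
Require Import Defs.
From Stdlib Require Import Reals Lra Psatz Classical.
From Coquelicot Require Import Coquelicot.
Open Scope C_scope.

Definition CD (f : C -> C) (z l : C) : Prop :=
  forall eps : R, (0 < eps)%R -> exists d : R, (0 < d)%R /\
    forall y, (Cmod (y - z) < d)%R -> (Cmod (f y - f z - (y - z) * l) <= eps * Cmod (y - z))%R.

Definition Ccont (f : C -> C) (z : C) : Prop :=
  forall eps : R, (0 < eps)%R -> exists d : R, (0 < d)%R /\
    forall y, (Cmod (y - z) < d)%R -> (Cmod (f y - f z) < eps)%R.

Lemma Cderiv_CD f z l : Cderiv f z l -> CD f z l.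
Proof.
  intros [_ H] eps He.
  specialize (H z (fun P HP => HP) (mkposreal eps He)).
  apply (locally_le_locally_norm (K:=C_AbsRing) (V:=AbsRing_NormedModule C_AbsRing) z) in H.
  destruct H as [d Hd].
  exists d. split. apply cond_pos.
  intros y Hy. apply (Hd y). exact Hy.
Qed.

Lemma CD_Cderiv f z l : CD f z l -> Cderiv f z l.
Proof.
  intros H. split. apply is_linear_scal_l.
  intros x Hx. apply (is_filter_lim_locally_unique (K:=C_AbsRing) (V:=AbsRing_NormedModule C_AbsRing)) in Hx. subst x.
  intros eps. apply (locally_norm_le_locally (K:=C_AbsRing) (V:=AbsRing_NormedModule C_AbsRing)).
  destruct (H eps (cond_pos eps)) as [d [Hd H']].
  exists (mkposreal d Hd). intros y Hy. apply H'. exact Hy.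
Qed.

Lemma Cmod_sym a b : Cmod (a - b) = Cmod (b - a).
Proof. rewrite <- Cmod_opp. f_equal. ring. Qed.

Lemma Cmod_Rmult (t : R) (b : C) : Cmod (RtoC t * b) = (Rabs t * Cmod b)%R.
Proof. rewrite Cmod_mult, Cmod_R. reflexivity. Qed.

Lemma Cmod_tri3 a b c : (Cmod (a + b + c) <= Cmod a + Cmod b + Cmod c)%R.
Proof. eapply Rle_trans. apply Cmod_triangle. pose proof (Cmod_triangle a b). lra. Qed.

Lemma Cmod_sub_le a b : (Cmod (a - b) <= Cmod a + Cmod b)%R.
Proof. unfold Cminus. eapply Rle_trans. apply Cmod_triangle. rewrite Cmod_opp. lra. Qed.

Lemma Cmod_rev_tri a b : (Cmod a - Cmod b <= Cmod (a - b))%R.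
Proof. pose proof (Cmod_triangle (a - b) b). replace (a - b + b) with a in H by ring. lra. Qed.

Lemma CD_cont f z l : CD f z l -> Ccont f z.
Proof.
  intros H eps He.
  destruct (H 1%R Rlt_0_1) as [d [Hd H']].
  pose proof (Cmod_ge_0 l).
  exists (Rmin d (eps / (Cmod l + 2)))%R. split.
  { apply Rmin_case. lra. apply Rdiv_lt_0_compat; lra. }
  intros y Hy. specialize (H' y (Rlt_le_trans _ _ _ Hy (Rmin_l _ _))).
  pose proof (Rlt_le_trans _ _ _ Hy (Rmin_r _ _)) as Hy2.
  replace (f y - f z) with ((f y - f z - (y - z) * l) + (y - z) * l) by ring.
  eapply Rle_lt_trans. apply Cmod_triangle. rewrite Cmod_mult.
  pose proof (Cmod_ge_0 (y - z)).
  assert (Cmod (y - z) * (Cmod l + 2) < eps)%R.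
  { apply Rmult_lt_reg_r with (/ (Cmod l + 2))%R. apply Rinv_0_lt_compat; lra.
    rewrite Rmult_assoc, Rinv_r by lra. unfold Rdiv in Hy2. lra. }
  nra.
Qed.

Lemma Re_lin c A B (h : R) bl :
  (Re (Cconj c * A) - Re (Cconj c * B) - h * Re (Cconj c * bl))%R
  = Re (Cconj c * (A - B - RtoC h * bl)).
Proof. destruct c, A, B, bl. unfold Cconj, Re, Cmult, Cminus, Cplus, Copp, RtoC. simpl. ring. Qed.

Lemma Re_sub c A B : (Re (Cconj c * A) - Re (Cconj c * B))%R = Re (Cconj c * (A - B)).
Proof. destruct c, A, B. unfold Cconj, Re, Cmult, Cminus, Cplus, Copp. simpl. ring. Qed.

Lemma Re_bound c X : (Re (Cconj c * X) <= Cmod c * Cmod X)%R.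
Proof.
  pose proof (re_le_Cmod (Cconj c * X)). rewrite Cmod_mult, Cmod_conj in H.
  apply Rabs_le_between in H. lra.
Qed.

Lemma Re_abs_bound c X : (Rabs (Re (Cconj c * X)) <= Cmod c * Cmod X)%R.
Proof.
  pose proof (re_le_Cmod (Cconj c * X)). rewrite Cmod_mult, Cmod_conj in H. exact H.
Qed.

Lemma Re_conj_self c : Re (Cconj c * c) = (Cmod c * Cmod c)%R.
Proof.
  pose proof (Cmod2_alt c). simpl in H. rewrite Rmult_1_r in H. rewrite H.
  destruct c. unfold Cconj, Re, Im, Cmult. simpl. ring.
Qed.

Lemma seg_diff (a b : C) (s t : R) : (a + RtoC s * b) - (a + RtoC t * b) = RtoC (s - t) * b.
Proof. destruct a, b. unfold Cminus, Cplus, Copp, Cmult, RtoC. simpl. f_equal; ring. Qed.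

Lemma proj_deriv f a b c t l :
  CD f (a + RtoC t * b) l ->
  is_derive (fun s : R => Re (Cconj c * f (a + RtoC s * b))) t (Re (Cconj c * (b * l))).
Proof.
  intros H. apply is_derive_Reals. intros eps He.
  pose proof (Cmod_ge_0 c). pose proof (Cmod_ge_0 b).
  set (K := (Cmod c * Cmod b + 1)%R).
  assert (HK : (0 < K)%R) by (unfold K; nra).
  destruct (H (eps / (2 * K))%R) as [d [Hd H']].
  { apply Rdiv_lt_0_compat; lra. }
  assert (Hd2 : (0 < d / (Cmod b + 1))%R) by (apply Rdiv_lt_0_compat; lra).
  exists (mkposreal _ Hd2). intros h Hh0 Hh. simpl pos in Hh.
  specialize (H' (a + RtoC (t + h) * b)).
  rewrite seg_diff in H'. replace (t + h - t)%R with h in H' by ring.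
  rewrite Cmod_Rmult in H'.
  assert (Hlt : (Rabs h * Cmod b < d)%R).
  { assert (Rabs h * (Cmod b + 1) < d)%R.
    { apply Rmult_lt_reg_r with (/ (Cmod b + 1))%R. apply Rinv_0_lt_compat; lra.
      rewrite Rmult_assoc, Rinv_r by lra. unfold Rdiv in Hh. lra. }
    pose proof (Rabs_pos h). nra. }
  specialize (H' Hlt).
  set (Y := f (a + RtoC (t + h) * b)) in *. set (Z := f (a + RtoC t * b)) in *.
  replace ((Re (Cconj c * Y) - Re (Cconj c * Z)) / h - Re (Cconj c * (b * l)))%R
    with (Re (Cconj c * (Y - Z - RtoC h * b * l)) / h)%R.
  2:{ rewrite <- (Cmult_assoc (RtoC h) b l). rewrite <- Re_lin. field. exact Hh0. }

  unfold Rdiv. rewrite Rabs_mult, Rabs_inv.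
  pose proof (Re_abs_bound c (Y - Z - RtoC h * b * l)) as HRe.
  assert (Hh1 : (0 < Rabs h)%R) by (apply Rabs_pos_lt; exact Hh0).
  apply Rmult_lt_reg_r with (Rabs h). exact Hh1.
  rewrite Rmult_assoc, Rinv_l by lra. rewrite Rmult_1_r.
  eapply Rle_lt_trans. exact HRe.
  assert (Cmod c * (eps / (2 * K) * (Rabs h * Cmod b)) < eps * Rabs h)%R.
  { replace (Cmod c * (eps / (2 * K) * (Rabs h * Cmod b)))%R
      with ((eps * Rabs h) * ((Cmod c * Cmod b) / (2 * K)))%R by (field; lra).
    assert ((Cmod c * Cmod b) / (2 * K) < 1)%R.
    { apply Rmult_lt_reg_r with (2 * K)%R. lra. unfold Rdiv.
      rewrite Rmult_assoc, Rinv_l by lra. unfold K. nra. }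
    assert (0 <= (Cmod c * Cmod b) / (2 * K))%R.
    { apply Rmult_le_pos. nra. left. apply Rinv_0_lt_compat. lra. }
    assert (0 < eps * Rabs h)%R by nra. nra. }
  eapply Rle_lt_trans. 2: exact H2. apply Rmult_le_compat_l. exact H0. exact H'.
Qed.

Lemma proj_cont f a b c t :
  Ccont f (a + RtoC t * b) ->
  continuity_pt (fun s : R => Re (Cconj c * f (a + RtoC s * b))) t.
Proof.
  intros H. unfold continuity_pt, continue_in, limit1_in, limit_in. simpl. unfold R_dist.
  intros eps He.
  pose proof (Cmod_ge_0 c). pose proof (Cmod_ge_0 b).
  destruct (H (eps / (Cmod c + 1))%R) as [d [Hd H']].
  { apply Rdiv_lt_0_compat; lra. }
  exists (d / (Cmod b + 1))%R. split. apply Rdiv_lt_0_compat; lra.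
  intros x [_ Hx].
  set (Y := f (a + RtoC x * b)). set (Z := f (a + RtoC t * b)).
  assert (Hfin : (Rabs (Re (Cconj c * Y) - Re (Cconj c * Z)) < eps)%R).
  2:{ exact Hfin. }
  specialize (H' (a + RtoC x * b)). rewrite seg_diff, Cmod_Rmult in H'.
  assert (Hlt : (Rabs (x - t) * Cmod b < d)%R).
  { assert (Rabs (x - t) * (Cmod b + 1) < d)%R.
    { apply Rmult_lt_reg_r with (/ (Cmod b + 1))%R. apply Rinv_0_lt_compat; lra.
      rewrite Rmult_assoc, Rinv_r by lra. unfold Rdiv in Hx. lra. }
    pose proof (Rabs_pos (x - t)). nra. }
  specialize (H' Hlt). fold Y Z in H'.
  rewrite Re_sub. eapply Rle_lt_trans. apply Re_abs_bound.
  pose proof (Cmod_ge_0 (Y - Z)).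
  assert (Cmod c * Cmod (Y - Z) <= Cmod c * (eps / (Cmod c + 1)))%R.
  { apply Rmult_le_compat_l; lra. }
  assert (Cmod c * (eps / (Cmod c + 1)) < eps)%R.
  { replace (Cmod c * (eps / (Cmod c + 1)))%R with (eps * (Cmod c / (Cmod c + 1)))%R by (field; lra).
    assert (Cmod c / (Cmod c + 1) < 1)%R.
    { apply Rmult_lt_reg_r with (Cmod c + 1)%R. lra. unfold Rdiv.
      rewrite Rmult_assoc, Rinv_l by lra. lra. }
    nra. }
  lra.
Qed.

Lemma mvi (f g : C -> C) (a b L : C) (t0 t1 M : R) :
  (t0 < t1)%R ->
  (forall t, (t0 <= t <= t1)%R -> Ccont f (a + RtoC t * b)) ->
  (forall t, (t0 < t < t1)%R -> CD f (a + RtoC t * b) (g (a + RtoC t * b))) ->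
  (forall t, (t0 < t < t1)%R -> (Cmod (g (a + RtoC t * b)%C - L) <= M)%R) ->
  (Cmod (f (a + RtoC t1 * b)%C - f (a + RtoC t0 * b)%C - RtoC (t1 - t0) * (b * L))
     <= (t1 - t0) * (Cmod b * M))%R.
Proof.
  intros Ht Hc Hd Hg.
  assert (HM : (0 <= M)%R).
  { eapply Rle_trans. apply Cmod_ge_0. apply (Hg ((t0 + t1) / 2)%R). lra. }
  set (c := f (a + RtoC t1 * b) - f (a + RtoC t0 * b) - RtoC (t1 - t0) * (b * L)).
  set (K := Re (Cconj c * (b * L))).
  set (psi := fun s : R => (Re (Cconj c * f (a + RtoC s * b)%C) - s * K)%R).
  set (dpsi := fun s : R => if Rlt_dec t0 s then if Rlt_dec s t1 then
                  (Re (Cconj c * (b * g (a + RtoC s * b)%C)) - K)%R else 0%R else 0%R).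
  destruct (MVT_gen psi t0 t1 dpsi) as [xi [Hxi Heq]].
  { rewrite Rmin_left, Rmax_right by lra. intros s Hs. unfold dpsi.
    destruct (Rlt_dec t0 s); [|lra]. destruct (Rlt_dec s t1); [|lra].
    unfold psi. apply (is_derive_minus (fun s0 => Re (Cconj c * f (a + RtoC s0 * b)%C)) (fun s0 => s0 * K)%R).
    apply proj_deriv. apply Hd. lra.
    auto_derive; [exact I | ring]. }
  { rewrite Rmin_left, Rmax_right by lra. intros s Hs. unfold psi.
    apply continuity_pt_minus. apply proj_cont. apply Hc. lra.
    apply continuity_pt_mult. apply continuity_pt_id. apply continuity_pt_const. intros u v; reflexivity. }
  assert (Hpsi : (psi t1 - psi t0)%R = (Cmod c * Cmod c)%R).
  { unfold psi. rewrite <- Re_conj_self.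
    replace (Re (Cconj c * f (a + RtoC t1 * b)%C) - t1 * K - (Re (Cconj c * f (a + RtoC t0 * b)%C) - t0 * K))%R
      with (Re (Cconj c * f (a + RtoC t1 * b)%C) - Re (Cconj c * f (a + RtoC t0 * b)%C) - (t1 - t0) * Re (Cconj c * (b * L)))%R
      by (unfold K; ring).
    rewrite Re_lin. reflexivity. }
  assert (Hdp : (dpsi xi <= Cmod c * (Cmod b * M))%R).
  { unfold dpsi. pose proof (Cmod_ge_0 c). pose proof (Cmod_ge_0 b).
    destruct (Rlt_dec t0 xi); [|apply Rmult_le_pos; [assumption | apply Rmult_le_pos; assumption]]. destruct (Rlt_dec xi t1); [|apply Rmult_le_pos; [assumption | apply Rmult_le_pos; assumption]].
    unfold K. rewrite Re_sub.
    replace (b * g (a + RtoC xi * b) - b * L) with (b * (g (a + RtoC xi * b) - L)) by ring.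
    eapply Rle_trans. apply Re_bound. rewrite Cmod_mult.
    apply Rmult_le_compat_l. lra. apply Rmult_le_compat_l. lra. apply Hg. lra. }
  fold c. pose proof (Cmod_ge_0 c). pose proof (Cmod_ge_0 b).
  assert (Cmod c * Cmod c <= (t1 - t0) * (Cmod c * (Cmod b * M)))%R.
  { rewrite <- Hpsi, Heq. rewrite Rmult_comm. apply Rmult_le_compat_l. lra. exact Hdp. }
  destruct (Rle_lt_or_eq_dec 0 (Cmod c) H) as [Hp|Hz].
  - apply Rmult_le_reg_l with (Cmod c). exact Hp. nra.
  - rewrite <- Hz. apply Rmult_le_pos. lra. apply Rmult_le_pos; lra.
Qed.

Definition Cderiv2 (f : C -> C) (z l : C) : Prop :=
  @is_derive C_AbsRing (AbsRing_NormedModule C_AbsRing) f z l.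

Lemma Cderiv2_CD f z l : Cderiv2 f z l -> CD f z l.
Proof.
  intros [_ H] eps He.
  specialize (H z (fun P HP => HP) (mkposreal eps He)).
  apply (locally_le_locally_norm (K:=C_AbsRing) (V:=AbsRing_NormedModule C_AbsRing) z) in H.
  destruct H as [d Hd].
  exists d. split. apply cond_pos.
  intros y Hy. apply (Hd y). exact Hy.
Qed.

Lemma CD_Cderiv2 f z l : CD f z l -> Cderiv2 f z l.
Proof.
  intros H. split. apply is_linear_scal_l.
  intros x Hx. apply (is_filter_lim_locally_unique (K:=C_AbsRing) (V:=AbsRing_NormedModule C_AbsRing)) in Hx. subst x.
  intros eps. apply (locally_norm_le_locally (K:=C_AbsRing) (V:=AbsRing_NormedModule C_AbsRing)).
  destruct (H eps (cond_pos eps)) as [d [Hd H']].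
  exists (mkposreal d Hd). intros y Hy. apply H'. exact Hy.
Qed.

Lemma CD_val f z l l' : l = l' -> CD f z l -> CD f z l'.
Proof. intros ->; auto. Qed.

Lemma CD_ext f g z l : (forall x, f x = g x) -> CD f z l -> CD g z l.
Proof.
  intros Hfg H eps He. destruct (H eps He) as [d [Hd H']]. exists d. split; auto.
  intros y Hy. rewrite <- !Hfg. auto.
Qed.


Lemma CD_mult f g z df dg : CD f z df -> CD g z dg -> CD (fun x => f x * g x) z (df * g z + f z * dg).
Proof.
  intros Hf Hg. apply Cderiv2_CD. apply CD_Cderiv2 in Hf. apply CD_Cderiv2 in Hg. unfold Cderiv2 in *.
  exact (is_derive_mult f g z df dg Hf Hg Cmult_comm).
Qed.

Lemma CD_plus f g z df dg : CD f z df -> CD g z dg -> CD (fun x => f x + g x) z (df + dg).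
Proof.
  intros Hf Hg. apply Cderiv2_CD. apply CD_Cderiv2 in Hf. apply CD_Cderiv2 in Hg. unfold Cderiv2 in *.
  exact (@is_derive_plus _ (AbsRing_NormedModule C_AbsRing) f g z df dg Hf Hg).
Qed.

Lemma CD_const (c : C) z : CD (fun _ => c) z 0.
Proof. apply Cderiv2_CD. unfold Cderiv2. exact (@is_derive_const _ (AbsRing_NormedModule C_AbsRing) c z). Qed.

Lemma CD_id z : CD (fun x => x) z 1.
Proof. apply Cderiv2_CD. unfold Cderiv2. exact (is_derive_id z). Qed.

Lemma CD_comp f g z df dg : CD f (g z) df -> CD g z dg -> CD (fun x => f (g x)) z (dg * df).
Proof.
  intros Hf Hg. apply Cderiv2_CD. apply CD_Cderiv2 in Hf. apply CD_Cderiv2 in Hg. unfold Cderiv2 in *.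
  exact (@is_derive_comp _ (AbsRing_NormedModule C_AbsRing) f g z df dg Hf Hg).
Qed.

Lemma CD_scal (k : C) f z df : CD f z df -> CD (fun x => k * f x) z (k * df).
Proof.
  intros Hf. apply (CD_val _ _ (0 * f z + k * df)). ring.
  exact (CD_mult (fun _ => k) f z 0 df (CD_const k z) Hf).
Qed.

Lemma CD_unique_const f z l (c : C) r :
  (0 < r)%R -> (forall y, (Cmod (y - z) < r)%R -> f y = c) -> CD f z l -> l = 0.
Proof.
  intros Hr Hc H. destruct (Ceq_dec l 0) as [|Hl]; auto. exfalso.
  assert (Hl' : (0 < Cmod l)%R) by (apply Cmod_gt_0; auto).
  destruct (H (Cmod l / 2)%R) as [d [Hd H']]. lra.
  set (h := (Rmin d r / 2)%R).
  assert (Hh : (0 < h)%R) by (unfold h; apply Rmin_case; lra).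
  specialize (H' (z + RtoC h)).
  replace (z + RtoC h - z) with (RtoC h) in H' by ring.
  rewrite Cmod_R, Rabs_pos_eq in H' by lra.
  assert (h < d)%R by (unfold h; pose proof (Rmin_l d r); lra).
  assert (h < r)%R by (unfold h; pose proof (Rmin_r d r); lra).
  specialize (H' H0).
  rewrite !Hc in H'.
  2:{ replace (z - z) with (RtoC 0) by ring. rewrite Cmod_R, Rabs_R0. lra. }
  2:{ replace (z + RtoC h - z) with (RtoC h) by ring. rewrite Cmod_R, Rabs_pos_eq; lra. }
  replace (c - c - RtoC h * l) with (- (RtoC h * l)) in H' by ring.
  rewrite Cmod_opp, Cmod_Rmult, Rabs_pos_eq in H' by lra. nra.
Qed.

Lemma local_incr (h : R -> R) x d : is_derive h x d -> (0 < d)%R ->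
  exists e, (0 < e)%R /\ forall s, (0 < s < e)%R -> (h x < h (x + s))%R.
Proof.
  intros H Hd. apply is_derive_Reals in H. destruct (H d Hd) as [e He].
  exists e. split. apply cond_pos. intros s Hs.
  assert (Hs0 : s <> 0%R) by lra.
  specialize (He s Hs0). rewrite Rabs_pos_eq in He by lra. specialize (He (proj2 Hs)).
  apply Rabs_lt_between in He.
  assert (0 < (h (x + s) - h x) / s)%R by lra.
  assert (0 < h (x + s) - h x)%R.
  { replace (h (x + s) - h x)%R with ((h (x + s) - h x) / s * s)%R by (field; lra). nra. }
  lra.
Qed.

Lemma local_decr (h : R -> R) x d : is_derive h x d -> (d < 0)%R ->
  exists e, (0 < e)%R /\ forall s, (0 < s < e)%R -> (h x < h (x - s))%R.
Proof.
  intros H Hd. apply is_derive_Reals in H. destruct (H (- d)%R ltac:(lra)) as [e He].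
  exists e. split. apply cond_pos. intros s Hs.
  assert (Hs0 : (- s)%R <> 0%R) by lra.
  specialize (He (- s)%R Hs0). rewrite Rabs_Ropp, Rabs_pos_eq in He by lra. specialize (He (proj2 Hs)).
  apply Rabs_lt_between in He.
  assert ((h (x + - s) - h x) / - s < 0)%R by lra.
  assert (0 < h (x + - s) - h x)%R.
  { replace (h (x + - s) - h x)%R with (((h (x + - s) - h x) / - s) * (- s))%R by (field; lra). nra. }
  replace (x - s)%R with (x + - s)%R by ring. lra.
Qed.

Lemma sign_persist (h h' : R -> R) (c : R) : (0 < c)%R ->
  (forall t, (0 <= t <= 1)%R -> is_derive h t (h' t)) ->
  (forall t, (0 <= t <= 1)%R -> (c <= h' t)%R \/ (h' t <= - c)%R) ->
  (c <= h' 0)%R -> (c <= h' 1)%R.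
Proof.
  intros Hc Hd Hs H0.
  destruct (Hs 1%R ltac:(lra)) as [ok|bad]; auto. exfalso.
  destruct (continuity_ab_maj h 0 1) as [m [Hm Hmr]]. lra.
  { intros t Ht. apply derivable_continuous_pt. exists (h' t). apply is_derive_Reals. apply Hd. exact Ht. }
  destruct (Hs m Hmr) as [Hp|Hn].
  - destruct (Req_dec m 1) as [->|Hm1]. lra.
    destruct (local_incr h m (h' m) (Hd m Hmr) ltac:(lra)) as [e [He Hi]].
    set (s := Rmin (e / 2) ((1 - m) / 2)).
    assert (0 < s)%R by (unfold s; apply Rmin_case; lra).
    assert (s <= e / 2)%R by apply Rmin_l. assert (s <= (1 - m) / 2)%R by apply Rmin_r.
    specialize (Hi s ltac:(lra)). specialize (Hm (m + s)%R ltac:(lra)). lra.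
  - destruct (Req_dec m 0) as [->|Hm0]. lra.
    destruct (local_decr h m (h' m) (Hd m Hmr) ltac:(lra)) as [e [He Hi]].
    set (s := Rmin (e / 2) (m / 2)).
    assert (0 < s)%R by (unfold s; apply Rmin_case; lra).
    assert (s <= e / 2)%R by apply Rmin_l. assert (s <= m / 2)%R by apply Rmin_r.
    specialize (Hi s ltac:(lra)). specialize (Hm (m - s)%R ltac:(lra)). lra.
Qed.

Definition Rcont (phi : R -> C) (t : R) : Prop :=
  forall eps, (0 < eps)%R -> exists d, (0 < d)%R /\
    forall s, (Rabs (s - t) < d)%R -> (Cmod (phi s - phi t) < eps)%R.

Lemma Ccont_seg f a b t : Ccont f (a + RtoC t * b) -> Rcont (fun s => f (a + RtoC s * b)) t.
Proof.
  intros H eps He. destruct (H eps He) as [d [Hd H']].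
  pose proof (Cmod_ge_0 b).
  exists (d / (Cmod b + 1))%R. split. apply Rdiv_lt_0_compat; lra.
  intros s Hs. apply H'. rewrite seg_diff, Cmod_Rmult.
  assert (Rabs (s - t) * (Cmod b + 1) < d)%R.
  { apply Rmult_lt_reg_r with (/ (Cmod b + 1))%R. apply Rinv_0_lt_compat; lra.
    rewrite Rmult_assoc, Rinv_r by lra. unfold Rdiv in Hs. lra. }
  pose proof (Rabs_pos (s - t)). nra.
Qed.

Lemma last_zero (phi : R -> C) :
  (forall t, (0 <= t <= 1)%R -> Rcont phi t) -> phi 0%R = 0 ->
  exists t0, (0 <= t0 <= 1)%R /\ phi t0 = 0 /\ forall t, (t0 < t <= 1)%R -> phi t <> 0.
Proof.
  intros Hc H0.
  set (E := fun t => (0 <= t <= 1)%R /\ phi t = 0).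
  destruct (completeness E) as [t0 [Hub Hlub]].
  { exists 1%R. intros x [Hx _]. lra. }
  { exists 0%R. split. lra. exact H0. }
  assert (Ht0 : (0 <= t0 <= 1)%R).
  { split. apply Hub. split. lra. exact H0. apply Hlub. intros x [Hx _]. lra. }
  exists t0. split. exact Ht0. split.
  - destruct (Ceq_dec (phi t0) 0) as [|Hn]; auto. exfalso.
    assert (Hp : (0 < Cmod (phi t0))%R) by (apply Cmod_gt_0; auto).
    destruct (Hc t0 Ht0 _ Hp) as [d [Hd H']].
    assert (t0 <= t0 - d / 2)%R; [|lra].
    apply Hlub. intros x [Hx Hphi].
    destruct (Rle_or_lt x (t0 - d / 2)) as [|Hlt]; auto. exfalso.
    assert (x <= t0)%R by (apply Hub; split; auto).
    specialize (H' x). rewrite Rabs_left1 in H' by lra. specialize (H' ltac:(lra)).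
    rewrite Hphi in H'. replace (0 - phi t0) with (- phi t0) in H' by ring. rewrite Cmod_opp in H'. lra.
  - intros t Ht Hz. assert (t <= t0)%R by (apply Hub; split; [lra|exact Hz]). lra.
Qed.

Lemma CD_minus f g z df dg : CD f z df -> CD g z dg -> CD (fun x => f x - g x) z (df - dg).
Proof.
  intros Hf Hg. apply (CD_val _ _ (df + (-1) * dg)). ring.
  apply (CD_ext (fun x => f x + (-1) * g x)). intros; ring.
  apply CD_plus. exact Hf. apply CD_scal. exact Hg.
Qed.

Lemma Cmod_sq X : (Cmod X * Cmod X)%R = (Re X * Re X + Im X * Im X)%R.
Proof. pose proof (Cmod2_alt X). simpl in H. rewrite !Rmult_1_r in H. exact H. Qed.

Lemma ball_convex z p x r t : (Cmod (p - z) < r)%R -> (Cmod (x - z) < r)%R -> (0 <= t <= 1)%R ->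
  (Cmod (p + RtoC t * (x - p) - z) < r)%R.
Proof.
  intros Hp Hx Ht.
  replace (p + RtoC t * (x - p) - z) with (RtoC (1 - t) * (p - z) + RtoC t * (x - z))
    by (rewrite RtoC_minus; ring).
  eapply Rle_lt_trans. apply Cmod_triangle. rewrite !Cmod_Rmult.
  rewrite (Rabs_pos_eq t), (Rabs_pos_eq (1 - t)) by lra.
  destruct (Req_dec t 0) as [->|Ht0]. nra. nra.
Qed.

Lemma seg0 a b : a + RtoC 0 * b = a.
Proof. ring. Qed.
Lemma seg1 p x : p + RtoC 1 * (x - p) = x.
Proof. ring. Qed.

Lemma dich a p : (Cmod ((a - p) * (a + p)) < Cmod p * Cmod p / 4)%R ->
  (Cmod (a - p) < Cmod p / 2)%R \/ (Cmod (a + p) < Cmod p / 2)%R.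
Proof.
  intros H. rewrite Cmod_mult in H.
  destruct (Rlt_or_le (Cmod (a - p)) (Cmod p / 2)); auto.
  destruct (Rlt_or_le (Cmod (a + p)) (Cmod p / 2)); auto.
  pose proof (Cmod_ge_0 p). exfalso. nra.
Qed.

Lemma Re_near_p p X : (Cmod (X - p) < Cmod p / 2)%R -> (Cmod p * Cmod p / 2 < Re (Cconj p * X))%R.
Proof.
  intros H. replace X with (p + (X - p)) by ring.
  replace (Re (Cconj p * (p + (X - p)))) with (Re (Cconj p * p) + Re (Cconj p * (X - p)))%R
    by (destruct p, X; simpl; ring).
  rewrite Re_conj_self. pose proof (Re_abs_bound p (X - p)). apply Rabs_le_between in H0.
  pose proof (Cmod_ge_0 p). pose proof (Cmod_ge_0 (X - p)). nra.
Qed.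

Lemma Re_near_mp p X : (Cmod (X + p) < Cmod p / 2)%R -> (Re (Cconj p * X) < - (Cmod p * Cmod p / 2))%R.
Proof.
  intros H. replace X with (- p + (X + p)) by ring.
  replace (Re (Cconj p * (- p + (X + p)))) with (- Re (Cconj p * p) + Re (Cconj p * (X + p)))%R
    by (destruct p, X; simpl; ring).
  rewrite Re_conj_self. pose proof (Re_abs_bound p (X + p)). apply Rabs_le_between in H0.
  pose proof (Cmod_ge_0 p). pose proof (Cmod_ge_0 (X + p)). nra.
Qed.

Lemma Re_scale p b X : Re (Cconj (p * b) * (b * X)) = (Cmod b * Cmod b * Re (Cconj p * X))%R.
Proof. rewrite Cmod_sq. destruct p, b, X. simpl. ring. Qed.

Section Main.
Variables (g2 g3 : C) (Dm : C -> Prop) (P V : C -> C).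
Hypothesis HD : forall w, Dm w -> exists r, (0 < r)%R /\ forall y, (Cmod (y - w) < r)%R -> Dm y.
Hypothesis HP : forall w, Dm w -> CD P w (V w).
Hypothesis HQ : forall w, Dm w -> V w * V w = 4 * (P w * P w * P w) - g2 * P w - g3.

Definition F x := 4 * (x * x * x) - g2 * x - g3.
Definition F1 x := 12 * (x * x) - g2.
Definition G x := 6 * (x * x) - g2 / 2.

Lemma F_deriv x : CD F x (F1 x).
Proof.
  unfold F, F1.
  apply (CD_val _ _ (4 * ((1 * x + x * 1) * x + x * x * 1) - g2 * 1 - 0)). field.
  apply (CD_minus (fun y => 4 * (y * y * y) - g2 * y) (fun _ => g3)).
  apply (CD_minus (fun y => 4 * (y * y * y)) (fun y => g2 * y)).
  apply (CD_scal 4 (fun y => y * y * y)).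
  apply (CD_mult (fun y => y * y) (fun y => y)).
  apply (CD_mult (fun y => y) (fun y => y)).
  apply CD_id. apply CD_id. apply CD_id. apply (CD_scal g2 (fun y => y)). apply CD_id. apply CD_const.
Qed.

Lemma G_deriv x : CD G x (12 * x).
Proof.
  unfold G.
  apply (CD_val _ _ (6 * (1 * x + x * 1) - 0)). field.
  apply (CD_minus (fun y => 6 * (y * y)) (fun _ => g2 / 2)).
  apply (CD_scal 6 (fun y => y * y)).
  apply (CD_mult (fun y => y) (fun y => y)). apply CD_id. apply CD_id. apply CD_const.
Qed.

Lemma P_cont w : Dm w -> Ccont P w.
Proof. intros Hw. eapply CD_cont. apply HP. exact Hw. Qed.

Lemma Q_deriv w : Dm w -> CD (fun y => F (P y)) w (V w * F1 (P w)).
Proof. intros Hw. apply (CD_comp F P). apply F_deriv. apply HP. exact Hw. Qed.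

Lemma Q_cont w : Dm w -> Ccont (fun y => F (P y)) w.
Proof. intros Hw. eapply CD_cont. apply Q_deriv. exact Hw. Qed.

Lemma GP_cont w : Dm w -> Ccont (fun y => G (P y)) w.
Proof. intros Hw. eapply CD_cont. apply (CD_comp G P). apply G_deriv. apply HP. exact Hw. Qed.

Lemma HQF w : Dm w -> V w * V w = F (P w).
Proof. intros Hw. rewrite HQ by exact Hw. reflexivity. Qed.


Lemma noncrit w0 : Dm w0 -> V w0 <> 0 -> CD V w0 (G (P w0)).
Proof.
  intros Hw0 Hp0. set (p := V w0).
  assert (Hpp : (0 < Cmod p)%R) by (apply Cmod_gt_0; auto).
  destruct (HD w0 Hw0) as [r0 [Hr0 Hball]].
  destruct (Q_cont w0 Hw0 (Cmod p * Cmod p / 4)%R) as [d1 [Hd1 Hq1]]. nra.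
  set (rho := Rmin r0 d1).
  assert (Hrho : (0 < rho)%R) by (unfold rho; apply Rmin_case; lra).
  assert (Hrho1 : (rho <= r0)%R) by apply Rmin_l.
  assert (Hrho2 : (rho <= d1)%R) by apply Rmin_r.
  assert (Hdich : forall y, (Cmod (y - w0) < rho)%R ->
            (Cmod (V y - p) < Cmod p / 2)%R \/ (Cmod (V y + p) < Cmod p / 2)%R).
  { intros y Hy. apply dich.
    replace ((V y - p) * (V y + p)) with (F (P y) - F (P w0)).
    apply Hq1. lra.
    rewrite <- !HQF. unfold p. ring. exact Hw0. apply Hball. lra. }
  assert (Hnear : forall w, (Cmod (w - w0) < rho)%R -> (Cmod (V w - p) < Cmod p / 2)%R).
  { intros w Hw. destruct (Ceq_dec w w0) as [->|Hne].
    { replace (V w0 - p) with (RtoC 0) by (unfold p; ring). rewrite Cmod_R, Rabs_R0. lra. }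
    set (b := w - w0).
    assert (Hb : (0 < Cmod b)%R) by (apply Cmod_gt_0; unfold b; intro Hc; apply Hne;
      replace w with (w - w0 + w0) by ring; rewrite Hc; ring).
    set (h := fun t : R => Re (Cconj (p * b) * P (w0 + RtoC t * b))).
    set (h' := fun t : R => Re (Cconj (p * b) * (b * V (w0 + RtoC t * b)))).
    assert (Hin : forall t, (0 <= t <= 1)%R -> (Cmod (w0 + RtoC t * b - w0) < rho)%R).
    { intros t Ht. replace (w0 + RtoC t * b - w0) with (RtoC t * b) by ring.
      assert (0 <= t)%R by (destruct Ht; assumption). rewrite Cmod_Rmult, Rabs_pos_eq by assumption. unfold b. pose proof (Cmod_ge_0 (w - w0)). nra. }
    assert (Hc : (0 < Cmod b * Cmod b * (Cmod p * Cmod p / 2))%R).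
    { apply Rmult_lt_0_compat. nra. nra. }
    assert (Hsp := sign_persist h h' _ Hc).
    assert (Hfin : (Cmod b * Cmod b * (Cmod p * Cmod p / 2) <= h' 1%R)%R).
    { apply Hsp.
      - intros t Ht. unfold h, h'. apply proj_deriv. apply HP. apply Hball.
        pose proof (Hin t Ht). lra.
      - intros t Ht. unfold h'. rewrite Re_scale.
        destruct (Hdich _ (Hin t Ht)) as [H1|H1]; [left|right].
        + apply Re_near_p in H1. nra.
        + apply Re_near_mp in H1. nra.
      - unfold h'. rewrite Re_scale, seg0. fold p. rewrite Re_conj_self. nra. }
    unfold h' in Hfin. rewrite Re_scale in Hfin.
    replace (w0 + RtoC 1 * b) with w in Hfin by (unfold b; ring).
    assert (Hpos : (Cmod p * Cmod p / 2 <= Re (Cconj p * V w))%R).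
    { apply Rmult_le_reg_l with (Cmod b * Cmod b)%R. nra. lra. }
    destruct (Hdich w) as [H1|H1]. lra. exact H1.
    apply Re_near_mp in H1. nra. }
  intros eps Heps.
  set (f1 := F1 (P w0)).
  pose proof (Cmod_ge_0 f1) as Hf1.
  destruct (Q_deriv w0 Hw0 (eps * Cmod p / 2)%R) as [d2 [Hd2 Hq2]]. nra.
  destruct (Q_cont w0 Hw0 (eps * Cmod p * Cmod p / (Cmod f1 + 1))%R) as [d3 [Hd3 Hq3]].
  { apply Rdiv_lt_0_compat. apply Rmult_lt_0_compat; [apply Rmult_lt_0_compat|]; lra. lra. }
  exists (Rmin rho (Rmin d2 d3)). split.
  { apply Rmin_case. lra. apply Rmin_case; lra. }
  intros y Hy.
  assert (Hy1 : (Cmod (y - w0) < rho)%R) by (eapply Rlt_le_trans; [exact Hy| apply Rmin_l]).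
  assert (Hy2 : (Cmod (y - w0) < d2)%R).
  { eapply Rlt_le_trans. exact Hy. eapply Rle_trans. apply Rmin_r. apply Rmin_l. }
  assert (Hy3 : (Cmod (y - w0) < d3)%R).
  { eapply Rlt_le_trans. exact Hy. eapply Rle_trans. apply Rmin_r. apply Rmin_r. }
  assert (HDy : Dm y) by (apply Hball; lra).
  specialize (Hq2 y Hy2). specialize (Hq3 y Hy3). specialize (Hnear y Hy1).
  fold f1 in Hq2. fold p in Hq2.
  assert (Hplus : (3 * Cmod p / 2 <= Cmod (V y + p))%R).
  { replace (V y + p) with (RtoC 2 * p + (V y - p)) by ring.
    pose proof (Cmod_rev_tri (RtoC 2 * p) (- (V y - p))).
    replace (RtoC 2 * p - - (V y - p)) with (RtoC 2 * p + (V y - p)) in H by ring.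
    rewrite Cmod_opp, Cmod_Rmult, Rabs_pos_eq in H by lra. lra. }
  assert (Hprod : (V y - p) * (V y + p) = F (P y) - F (P w0)).
  { rewrite <- !HQF by assumption. unfold p. ring. }
  assert (Hsmall : (Cmod (V y - p) * (Cmod f1 + 1) <= eps * Cmod p)%R).
  { rewrite <- Hprod, Cmod_mult in Hq3.
    assert (Cmod (V y - p) * (3 * Cmod p / 2) <= eps * Cmod p * Cmod p / (Cmod f1 + 1))%R.
    { pose proof (Cmod_ge_0 (V y - p)). nra. }
    assert (Cmod (V y - p) * (3 * Cmod p / 2) * (Cmod f1 + 1) <= eps * Cmod p * Cmod p)%R.
    { replace (eps * Cmod p * Cmod p)%R with (eps * Cmod p * Cmod p / (Cmod f1 + 1) * (Cmod f1 + 1))%R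
        by (field; lra). apply Rmult_le_compat_r; lra. }
    pose proof (Cmod_ge_0 (V y - p)). nra. }
  assert (Hid : (V y + p) * (V y - p - (y - w0) * G (P w0)) =
     (F (P y) - F (P w0) - (y - w0) * (p * f1)) - (y - w0) * f1 * (V y - p) / 2).
  { rewrite <- !HQF by assumption. unfold f1, F1, G, p. field. }
  assert (Hbd : (Cmod (V y + p) * Cmod (V y - p - (y - w0) * G (P w0)) <= eps * Cmod p * Cmod (y - w0))%R).
  { rewrite <- Cmod_mult, Hid. eapply Rle_trans. apply Cmod_sub_le.
    replace ((y - w0) * f1 * (V y - p) / 2) with ((y - w0) * (f1 * (V y - p) / 2)) by (field).
    rewrite (Cmod_mult (y - w0)). rewrite Cmod_div by (intro H2; inversion H2; lra).
    rewrite Cmod_mult. replace (Cmod 2) with 2%R by (rewrite Cmod_R, Rabs_pos_eq; lra).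
    pose proof (Cmod_ge_0 (y - w0)). pose proof (Cmod_ge_0 (V y - p)).
    assert (Cmod f1 * Cmod (V y - p) <= eps * Cmod p)%R by nra.
    assert (Cmod (y - w0) * (Cmod f1 * Cmod (V y - p) / 2) <= Cmod (y - w0) * (eps * Cmod p / 2))%R.
    { apply Rmult_le_compat_l. lra. lra. }
    nra. }
  pose proof (Cmod_ge_0 (V y - p - (y - w0) * G (P w0))).
  pose proof (Cmod_ge_0 (y - w0)).
  replace (V y - V w0 - (y - w0) * G (P w0)) with (V y - p - (y - w0) * G (P w0)) by reflexivity.
  assert (Cmod (V y - p - (y - w0) * G (P w0)) * (3 * Cmod p / 2) <= eps * Cmod p * Cmod (y - w0))%R.
  { eapply Rle_trans. 2: exact Hbd. rewrite (Rmult_comm (Cmod (V y + p))).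
    apply Rmult_le_compat_l; lra. }
  nra.
Qed.


Lemma sq_lt a b : (0 <= a)%R -> (0 <= b)%R -> (a * a < b * b)%R -> (a < b)%R.
Proof. intros. nra. Qed.

Lemma sq_le a b : (0 <= a)%R -> (0 <= b)%R -> (a * a <= b * b)%R -> (a <= b)%R.
Proof. intros. nra. Qed.

Lemma V_cont w : Dm w -> Ccont V w.
Proof.
  intros Hw. destruct (Ceq_dec (V w) 0) as [H0|Hn].
  2:{ eapply CD_cont. apply noncrit; assumption. }
  intros eps Heps.
  destruct (HD w Hw) as [r0 [Hr0 Hball]].
  destruct (Q_cont w Hw (eps * eps)%R) as [d [Hd Hq]]. nra.
  exists (Rmin r0 d). split. apply Rmin_case; lra.
  intros y Hy.
  assert (Hy1 : (Cmod (y - w) < r0)%R) by (eapply Rlt_le_trans; [exact Hy | apply Rmin_l]).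
  assert (Hy2 : (Cmod (y - w) < d)%R) by (eapply Rlt_le_trans; [exact Hy | apply Rmin_r]).
  specialize (Hq y Hy2). rewrite <- !HQF in Hq by (auto). rewrite H0 in Hq |- *.
  replace (V y * V y - 0 * 0) with (V y * V y) in Hq by ring.
  replace (V y - 0) with (V y) by ring. rewrite Cmod_mult in Hq.
  apply sq_lt; try apply Cmod_ge_0; lra.
Qed.

Lemma multroot z : Dm z -> V z = 0 -> F1 (P z) = 0 -> CD V z (G (P z)).
Proof.
  intros Hz Hv Hf1. set (e := P z) in *.
  assert (Hg2 : g2 = 12 * (e * e)).
  { unfold F1 in Hf1. replace g2 with (12 * (e * e) - (12 * (e * e) - g2)) by ring. rewrite Hf1. ring. }
  assert (Hg3 : g3 = -8 * (e * e * e)).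
  { pose proof (HQF z Hz) as H. rewrite Hv in H. unfold F in H. fold e in H. rewrite Hg2 in H.
    replace g3 with (0 * 0 + g3) by ring. rewrite H. ring. }
  assert (HG : G e = 0) by (unfold G; rewrite Hg2; field).
  rewrite HG.
  intros eps Heps.
  pose proof (Cmod_ge_0 e) as He.
  set (K := (3 * Cmod e + 1)%R).
  set (ep := (eps / (2 * K))%R).
  assert (HK : (1 <= K)%R) by (unfold K; lra).
  assert (Hep : (0 < ep)%R) by (unfold ep; apply Rdiv_lt_0_compat; lra).
  destruct (HP z Hz ep Hep) as [d [Hd Hd']]. rewrite Hv in Hd'.
  destruct (HD z Hz) as [r0 [Hr0 Hball]].
  exists (Rmin (Rmin d r0) (1 / (ep + 1))). split.
  { apply Rmin_case. apply Rmin_case; lra. apply Rdiv_lt_0_compat; lra. }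
  intros y Hy.
  assert (Hy1 : (Cmod (y - z) < d)%R).
  { eapply Rlt_le_trans. exact Hy. eapply Rle_trans; apply Rmin_l. }
  assert (Hy2 : (Cmod (y - z) < r0)%R).
  { eapply Rlt_le_trans. exact Hy. eapply Rle_trans. apply Rmin_l. apply Rmin_r. }
  assert (Hy3 : (Cmod (y - z) < 1 / (ep + 1))%R).
  { eapply Rlt_le_trans. exact Hy. apply Rmin_r. }
  specialize (Hd' y Hy1). fold e in Hd'.
  replace (P y - e - (y - z) * 0) with (P y - e) in Hd' by ring.
  pose proof (Cmod_ge_0 (y - z)) as Hyz.
  assert (Hu1 : (Cmod (P y - e) <= 1)%R).
  { eapply Rle_trans. exact Hd'. assert (Cmod (y - z) * (ep + 1) < 1)%R.
    { apply Rmult_lt_reg_r with (/ (ep + 1))%R. apply Rinv_0_lt_compat; lra.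
      rewrite Rmult_assoc, Rinv_r by lra. unfold Rdiv in Hy3. lra. }
    nra. }
  assert (HVy : V y * V y = 4 * ((P y - e) * (P y - e)) * (P y + 2 * e)).
  { rewrite (HQF y (Hball y Hy2)). unfold F. rewrite Hg2, Hg3. ring. }
  assert (Hpe : (Cmod (P y + 2 * e) <= K)%R).
  { replace (P y + 2 * e) with ((P y - e) + 3 * e) by ring.
    eapply Rle_trans. apply Cmod_triangle. rewrite Cmod_mult.
    replace (Cmod 3) with 3%R by (rewrite Cmod_R, Rabs_pos_eq; lra). unfold K. lra. }
  rewrite Hv. replace (V y - 0 - (y - z) * 0) with (V y) by ring.
  apply sq_le. apply Cmod_ge_0. nra.
  rewrite <- Cmod_mult, HVy, !Cmod_mult.
  replace (Cmod 4) with 4%R by (rewrite Cmod_R, Rabs_pos_eq; lra).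
  pose proof (Cmod_ge_0 (P y - e)).
  assert (Hsq : (Cmod (P y - e) * Cmod (P y - e) <= ep * ep * (Cmod (y - z) * Cmod (y - z)))%R).
  { assert (ep * Cmod (y - z) >= 0)%R by nra. nra. }
  assert (HepK : (4 * (ep * ep) * K <= eps * eps)%R).
  { unfold ep. replace (4 * (eps / (2 * K) * (eps / (2 * K))) * K)%R with (eps * eps / K)%R by (field; lra).
    apply Rmult_le_reg_r with K. lra. unfold Rdiv. rewrite Rmult_assoc, Rinv_l by lra. nra. }
  pose proof (Cmod_ge_0 (P y + 2 * e)).
  assert (4 * (Cmod (P y - e) * Cmod (P y - e)) * Cmod (P y + 2 * e)
          <= 4 * (ep * ep * (Cmod (y - z) * Cmod (y - z))) * K)%R.
  { apply Rmult_le_compat. nra. lra. nra. exact Hpe. }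
  assert (4 * (ep * ep * (Cmod (y - z) * Cmod (y - z))) * K
          <= eps * Cmod (y - z) * (eps * Cmod (y - z)))%R.
  { replace (4 * (ep * ep * (Cmod (y - z) * Cmod (y - z))) * K)%R
      with ((4 * (ep * ep) * K) * (Cmod (y - z) * Cmod (y - z)))%R by ring.
    replace (eps * Cmod (y - z) * (eps * Cmod (y - z)))%R
      with ((eps * eps) * (Cmod (y - z) * Cmod (y - z)))%R by ring.
    apply Rmult_le_compat_r. nra. exact HepK. }
  replace (4 * (Cmod (P y - e) * Cmod (P y - e)) * Cmod (P y + 2 * e))%R
    with (4 * Cmod (P y - e) * Cmod (P y - e) * Cmod (P y + 2 * e))%R in H1 by ring.
  lra.
Qed.


Definition Good (z : C) (r : R) (k : C) := (0 < r)%R /\ k <> 0 /\ (forall y, (Cmod (y - z) < r)%R -> Dm y) /\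
  (forall y, (Cmod (y - z) < r)%R -> (Cmod (G (P y) - k / 2)%C <= Cmod k / 8)%R).

Lemma good_exists z : Dm z -> F1 (P z) <> 0 -> exists r, Good z r (F1 (P z)).
Proof.
  intros Hz Hk. destruct (HD z Hz) as [r0 [Hr0 Hball]].
  assert (Hkp : (0 < Cmod (F1 (P z)))%R) by (apply Cmod_gt_0; auto).
  destruct (GP_cont z Hz (Cmod (F1 (P z)) / 8)%R) as [d [Hd Hg]]. lra.
  exists (Rmin r0 d). split. apply Rmin_case; lra. split. exact Hk. split.
  - intros y Hy. apply Hball. eapply Rlt_le_trans. exact Hy. apply Rmin_l.
  - intros y Hy. replace (F1 (P z) / 2) with (G (P z)) by (unfold G, F1; field).
    left. apply Hg. eapply Rlt_le_trans. exact Hy. apply Rmin_r.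
Qed.

Lemma GF z r k p x : Good z r k -> (Cmod (p - z) < r)%R -> (Cmod (x - z) < r)%R ->
  V p = 0 -> V x <> 0 ->
  exists lam, (0 < lam <= 1)%R /\
    (Cmod (V x - RtoC lam * ((x - p) * (k / 2)))%C <= lam * (Cmod (x - p) * (Cmod k / 8)))%R.
Proof.
  intros [Hr [Hk [HDb Hb]]] Hp Hx Hvp Hvx.
  set (b := x - p).
  assert (Hseg : forall t, (0 <= t <= 1)%R -> (Cmod (p + RtoC t * b - z) < r)%R).
  { intros t Ht. apply ball_convex; auto. }
  destruct (last_zero (fun t => V (p + RtoC t * b))) as [t0 [Ht0 [Hz0 Hnz]]].
  { intros t Ht. apply Ccont_seg. apply V_cont. apply HDb. apply Hseg. exact Ht. }
  { rewrite seg0. exact Hvp. }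
  assert (Ht01 : (t0 < 1)%R).
  { destruct (Req_dec t0 1) as [->|Hne]. exfalso. apply Hvx. rewrite <- (seg1 p x). exact Hz0. lra. }
  pose proof (mvi V (fun w => G (P w)) p b (k / 2) t0 1 (Cmod k / 8) Ht01) as Hm.
  simpl in Hm.
  assert (Hm' : (Cmod (V (p + RtoC 1 * b) - V (p + RtoC t0 * b) - RtoC (1 - t0) * (b * (k / 2)))
     <= (1 - t0) * (Cmod b * (Cmod k / 8)))%R).
  { apply Hm.
    - intros t Ht. apply V_cont. apply HDb. apply Hseg. lra.
    - intros t Ht. apply noncrit. apply HDb. apply Hseg. lra. apply Hnz. lra.
    - intros t Ht. apply Hb. apply Hseg. lra. }
  rewrite Hz0 in Hm'. unfold b in *. rewrite seg1 in Hm'.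
  exists (1 - t0)%R. split. lra.
  replace (V x - RtoC (1 - t0) * ((x - p) * (k / 2)))
    with (V x - 0 - RtoC (1 - t0) * ((x - p) * (k / 2))) by ring.
  exact Hm'.
Qed.


Lemma modsq_comb (a1 a2 : R) A B :
  (Cmod (RtoC a1 * A - RtoC a2 * B) * Cmod (RtoC a1 * A - RtoC a2 * B)
   = a1 * a1 * (Cmod A * Cmod A) + a2 * a2 * (Cmod B * Cmod B) - 2 * a1 * a2 * Re (Cconj A * B))%R.
Proof. rewrite !Cmod_sq. destruct A, B. simpl. ring. Qed.

Lemma NoObtuse z r k p1 p2 x : Good z r k ->
  (Cmod (p1 - z) < r)%R -> (Cmod (p2 - z) < r)%R -> (Cmod (x - z) < r)%R ->
  V p1 = 0 -> V p2 = 0 -> (Re (Cconj (x - p1) * (x - p2)) <= 0)%R -> V x = 0.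
Proof.
  intros Hg H1 H2 Hx Hv1 Hv2 Hre.
  destruct (Ceq_dec (V x) 0) as [|Hn]; auto. exfalso.
  destruct (GF z r k p1 x Hg H1 Hx Hv1 Hn) as [a1 [Ha1 G1]].
  destruct (GF z r k p2 x Hg H2 Hx Hv2 Hn) as [a2 [Ha2 G2]].
  destruct Hg as [_ [Hk _]].
  assert (Hkp : (0 < Cmod k)%R) by (apply Cmod_gt_0; auto).
  set (A := x - p1) in *. set (B := x - p2) in *.
  assert (HA : (0 < Cmod A)%R).
  { apply Cmod_gt_0. intro HA0. apply Hn. replace x with p1. exact Hv1.
    replace x with (x - p1 + p1) by ring. fold A. rewrite HA0. ring. }
  pose proof (Cmod_ge_0 B) as HB.
  set (W := Cmod (RtoC a1 * A - RtoC a2 * B)).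
  assert (HW : (W * (Cmod k / 2) <= (a1 * Cmod A + a2 * Cmod B) * (Cmod k / 8))%R).
  { unfold W. replace (Cmod k / 2)%R with (Cmod (k / 2)).
    2:{ unfold Cdiv. rewrite Cmod_mult, Cmod_inv. rewrite Cmod_R, Rabs_pos_eq by lra. reflexivity.
        intro H0; inversion H0; lra. }
    rewrite <- Cmod_mult.
    replace ((RtoC a1 * A - RtoC a2 * B) * (k / 2))
      with ((V x - RtoC a2 * (B * (k / 2))) - (V x - RtoC a1 * (A * (k / 2)))) by ring.
    eapply Rle_trans. apply Cmod_sub_le. nra. }
  assert (HW2 : (W <= (a1 * Cmod A + a2 * Cmod B) / 4)%R).
  { apply Rmult_le_reg_r with (Cmod k / 2)%R. lra.
    replace ((a1 * Cmod A + a2 * Cmod B) / 4 * (Cmod k / 2))%R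
      with ((a1 * Cmod A + a2 * Cmod B) * (Cmod k / 8))%R by field. exact HW. }
  assert (HWsq : (W * W = a1 * a1 * (Cmod A * Cmod A) + a2 * a2 * (Cmod B * Cmod B)
                  - 2 * a1 * a2 * Re (Cconj A * B))%R) by (unfold W; apply modsq_comb).
  assert (HW0 : (0 <= W)%R) by apply Cmod_ge_0.
  set (u := (a1 * Cmod A)%R) in *. set (v := (a2 * Cmod B)%R) in *.
  assert (Hu : (0 < u)%R) by (unfold u; nra).
  assert (Hv : (0 <= v)%R) by (unfold v; nra).
  assert (Hcross : (0 <= - 2 * a1 * a2 * Re (Cconj A * B))%R).
  { assert (0 <= a1 * a2)%R by nra. nra. }
  assert (HWge : (u * u + v * v <= W * W)%R) by (unfold u, v; nra).
  assert (HWle : (W * W <= (u + v) * (u + v) / 16)%R).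
  { assert (W * W <= (u + v) / 4 * ((u + v) / 4))%R by (apply Rmult_le_compat; lra).
    nra. }
  assert (0 <= (u - v) * (u - v))%R by nra.
  assert (0 < u * u)%R by nra. assert (0 <= v * v)%R by nra.
  nra.
Qed.


Lemma pow2_ge n : (INR n <= 2 ^ n)%R.
Proof.
  induction n. simpl. lra. rewrite S_INR. simpl.
  assert (1 <= 2 ^ n)%R by (apply pow_R1_Rle; lra). lra.
Qed.

Lemma Re_diam y d : Re (Cconj (y + d) * (y - d)) = (Cmod y * Cmod y - Cmod d * Cmod d)%R.
Proof. rewrite !Cmod_sq. destruct y, d. simpl. ring. Qed.

Definition hp : C := ((1/2)%R, (1/2)%R).
Definition hm : C := ((1/2)%R, (-1/2)%R).

Lemma hp_sq : (Cmod hp * Cmod hp = 1/2)%R.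
Proof. rewrite Cmod_sq. unfold hp. simpl. field. Qed.

Lemma Re_hm_hp y : Re (Cconj (y * hm) * (y * hp)) = 0%R.
Proof. destruct y. unfold hm, hp. simpl. field. Qed.

Lemma one_hp : 1 - hp = hm.
Proof. unfold hp, hm, Cminus, Cplus, Copp. simpl. f_equal; field. Qed.

Lemma dichotomy z r k : Good z r k -> V z = 0 ->
  (forall w, (0 < Cmod (w - z) < r / 4)%R -> V w <> 0) \/
  (forall w, (Cmod (w - z) < 3 * r / 8)%R -> V w = 0).
Proof.
  intros Hg Hvz.
  destruct (classic (forall w, (0 < Cmod (w - z) < r / 4)%R -> V w <> 0)) as [|Hnot]; [left; auto| right].
  apply not_all_ex_not in Hnot. destruct Hnot as [z1 Hz1].
  apply imply_to_and in Hz1. destruct Hz1 as [Hd Hv1]. apply NNPP in Hv1.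
  pose proof Hg as [Hr _].
  set (c0 := (z + z1) / 2). set (dd := (z1 - z) / 2). set (rho0 := Cmod dd).
  assert (Hrho : rho0 = (Cmod (z1 - z) / 2)%R).
  { unfold rho0, dd, Cdiv. rewrite Cmod_mult, Cmod_inv, Cmod_R, Rabs_pos_eq. reflexivity. lra.
    intro H0; inversion H0; lra. }
  assert (Hc0z : c0 - z = dd) by (unfold c0, dd; field).
  assert (Hrho0 : (0 < rho0 < r / 8)%R) by lra.
  assert (Hzz : (Cmod (z - z) < r)%R) by (replace (z - z) with (RtoC 0) by ring; rewrite Cmod_R, Rabs_R0; lra).
  assert (Hz1z : (Cmod (z1 - z) < r)%R) by lra.
  assert (Hdist : forall x, (Cmod (x - z) <= Cmod (x - c0) + rho0)%R).
  { intros x. replace (x - z) with ((x - c0) + (c0 - z)) by ring. rewrite Hc0z. apply Cmod_triangle. }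
  assert (Hbase : forall x, (Cmod (x - c0) <= rho0)%R -> V x = 0).
  { intros x Hx. apply (NoObtuse z r k z z1 x Hg Hzz Hz1z).
    pose proof (Hdist x). lra. exact Hvz. exact Hv1.
    replace (x - z) with ((x - c0) + dd) by (rewrite <- Hc0z; ring).
    replace (x - z1) with ((x - c0) - dd) by (unfold c0, dd; field).
    rewrite Re_diam. fold rho0. pose proof (Cmod_ge_0 (x - c0)). nra. }
  assert (Hind : forall n x, (Cmod (x - c0) * Cmod (x - c0) <= 2 ^ n * (rho0 * rho0))%R ->
                   (Cmod (x - c0) <= r / 2)%R -> V x = 0).
  { induction n; intros x Hx1 Hx2.
    - apply Hbase. apply sq_le. apply Cmod_ge_0. lra. simpl in Hx1. lra.
    - set (y := x - c0) in *.
      set (pp := c0 + y * hp). set (pm := c0 + y * hm).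
      assert (Hpp : pp - c0 = y * hp) by (unfold pp; ring).
      assert (Hpm : pm - c0 = y * hm) by (unfold pm; ring).
      assert (Hhm : (Cmod hm * Cmod hm = 1/2)%R) by (rewrite Cmod_sq; unfold hm; simpl; field).
      pose proof hp_sq as Hhp.
      assert (Hy0 : (0 <= Cmod y)%R) by apply Cmod_ge_0.
      assert (Hhp0 : (0 <= Cmod hp)%R) by apply Cmod_ge_0.
      assert (Hhm0 : (0 <= Cmod hm)%R) by apply Cmod_ge_0.
      assert (Hhp1 : (Cmod hp <= 1)%R) by nra.
      assert (Hhm1 : (Cmod hm <= 1)%R) by nra.
      simpl in Hx1.
      assert (Hsq2 : forall h, (Cmod h * Cmod h = 1/2)%R -> (Cmod h <= 1)%R ->
                (Cmod (y * h) * Cmod (y * h) <= 2 ^ n * (rho0 * rho0))%R /\ (Cmod (y * h) <= r / 2)%R).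
      { intros h Hh Hh1. rewrite Cmod_mult. split.
        replace (Cmod y * Cmod h * (Cmod y * Cmod h))%R with (Cmod y * Cmod y * (Cmod h * Cmod h))%R by ring.
        rewrite Hh. lra. pose proof (Cmod_ge_0 h). nra. }
      destruct (Hsq2 hp Hhp Hhp1) as [Ap Bp]. destruct (Hsq2 hm Hhm Hhm1) as [Am Bm].
      assert (Vpp : V pp = 0) by (apply IHn; rewrite Hpp; assumption).
      assert (Vpm : V pm = 0) by (apply IHn; rewrite Hpm; assumption).
      apply (NoObtuse z r k pp pm x Hg).
      + pose proof (Hdist pp). rewrite Hpp in H. lra.
      + pose proof (Hdist pm). rewrite Hpm in H. lra.
      + pose proof (Hdist x). fold y in H. lra.
      + exact Vpp.
      + exact Vpm.
      + replace (x - pp) with (y * hm).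
        2:{ unfold pp, y. rewrite <- one_hp. ring. }
        replace (x - pm) with (y * hp).
        2:{ unfold pm, y. rewrite <- one_hp. ring. }
        rewrite Re_hm_hp. lra. }
  destruct (INR_unbounded ((r / 2) * (r / 2) / (rho0 * rho0))%R) as [N HN].
  pose proof (pow2_ge N).
  intros w Hw.
  apply (Hind N w).
  - assert (Cmod (w - c0) <= r / 2)%R.
    { replace (w - c0) with ((w - z) - dd) by (rewrite <- Hc0z; ring).
      eapply Rle_trans. apply Cmod_sub_le. fold rho0. lra. }
    assert ((r / 2) * (r / 2) <= 2 ^ N * (rho0 * rho0))%R.
    { assert (0 < rho0 * rho0)%R by nra.
      assert ((r / 2) * (r / 2) / (rho0 * rho0) < 2 ^ N)%R by lra.
      apply Rmult_lt_compat_r with (r := (rho0 * rho0)%R) in H2; [|lra].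
      unfold Rdiv in H2. rewrite Rmult_assoc, Rinv_l in H2 by lra. lra. }
    pose proof (Cmod_ge_0 (w - c0)). nra.
  - replace (w - c0) with ((w - z) - dd) by (rewrite <- Hc0z; ring).
    eapply Rle_trans. apply Cmod_sub_le. fold rho0. lra.
Qed.


Lemma simple_deriv z r k : Good z r k -> V z = 0 ->
  (forall w, (0 < Cmod (w - z) < r / 4)%R -> V w <> 0) -> CD V z (G (P z)).
Proof.
  intros Hg Hvz Hi eps Heps.
  destruct Hg as [Hr [Hk [HDb Hb]]].
  assert (Hz : Dm z) by (apply HDb; replace (z - z) with (RtoC 0) by ring; rewrite Cmod_R, Rabs_R0; lra).
  destruct (GP_cont z Hz eps Heps) as [d1 [Hd1 Hc1]].
  exists (Rmin d1 (r / 4)). split. apply Rmin_case; lra.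
  intros y Hy.
  assert (Hy1 : (Cmod (y - z) < d1)%R) by (eapply Rlt_le_trans; [exact Hy | apply Rmin_l]).
  assert (Hy2 : (Cmod (y - z) < r / 4)%R) by (eapply Rlt_le_trans; [exact Hy | apply Rmin_r]).
  destruct (Ceq_dec y z) as [->|Hne].
  { replace (V z - V z - (z - z) * G (P z)) with (RtoC 0) by ring.
    replace (z - z) with (RtoC 0) by ring. rewrite Cmod_R, Rabs_R0. lra. }
  set (b := y - z).
  assert (Hbp : (0 < Cmod b)%R).
  { apply Cmod_gt_0. intro Hb0. apply Hne. replace y with (y - z + z) by ring. fold b. rewrite Hb0. ring. }
  assert (Hpt : forall t, (0 <= t <= 1)%R -> Cmod (z + RtoC t * b - z) = (t * Cmod b)%R).
  { intros t Ht. replace (z + RtoC t * b - z) with (RtoC t * b) by ring.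
    rewrite Cmod_Rmult, Rabs_pos_eq by lra. reflexivity. }
  pose proof (mvi V (fun w => G (P w)) z b (G (P z)) 0 1 eps ltac:(lra)) as Hm.
  assert (Hm' : (Cmod (V (z + RtoC 1 * b) - V (z + RtoC 0 * b) - RtoC (1 - 0) * (b * G (P z)))
     <= (1 - 0) * (Cmod b * eps))%R).
  { apply Hm.
    - intros t Ht. apply V_cont. apply HDb. rewrite Hpt by lra. unfold b. nra.
    - intros t Ht. apply noncrit. apply HDb. rewrite Hpt by lra. unfold b. nra.
      apply Hi. rewrite Hpt by lra. split. nra. unfold b. nra.
    - intros t Ht. left. apply Hc1. rewrite Hpt by lra. unfold b. nra. }
  rewrite seg0 in Hm'. unfold b in *. rewrite seg1 in Hm'.
  replace (RtoC (1 - 0)) with (RtoC 1) in Hm' by (f_equal; ring).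
  replace (V y - V z - RtoC 1 * ((y - z) * G (P z))) with (V y - V z - (y - z) * G (P z)) in Hm' by ring.
  lra.
Qed.

Lemma const_on_ball w rr : (forall y, (Cmod (y - w) < rr)%R -> Dm y /\ V y = 0) ->
  forall y, (Cmod (y - w) < rr)%R -> P y = P w.
Proof.
  intros Hb y Hy.
  assert (Hpt : forall t, (0 <= t <= 1)%R -> (Cmod (w + RtoC t * (y - w) - w) < rr)%R).
  { intros t Ht. replace (w + RtoC t * (y - w) - w) with (RtoC t * (y - w)) by ring.
    rewrite Cmod_Rmult, Rabs_pos_eq by lra. pose proof (Cmod_ge_0 (y - w)). nra. }
  pose proof (mvi P V w (y - w) 0 0 1 0 ltac:(lra)) as Hm.
  assert (Hm' : (Cmod (P (w + RtoC 1 * (y - w)) - P (w + RtoC 0 * (y - w)) - RtoC (1 - 0) * ((y - w) * 0))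
     <= (1 - 0) * (Cmod (y - w) * 0))%R).
  { apply Hm.
    - intros t Ht. apply P_cont. apply Hb. apply Hpt. lra.
    - intros t Ht. apply HP. apply Hb. apply Hpt. lra.
    - intros t Ht. destruct (Hb _ (Hpt t ltac:(lra))) as [_ ->].
      replace (0 - 0) with (RtoC 0) by ring. rewrite Cmod_R, Rabs_R0. lra. }
  rewrite seg0, seg1 in Hm'.
  replace (P y - P w - RtoC (1 - 0) * ((y - w) * 0)) with (P y - P w) in Hm' by ring.
  assert (Cmod (P y - P w) = 0)%R by (pose proof (Cmod_ge_0 (P y - P w)); lra).
  apply Cmod_eq_0 in H. replace (P y) with (P y - P w + P w) by ring. rewrite H. ring.
Qed.

Lemma mult_formula z : Dm z -> V z = 0 -> F1 (P z) = 0 ->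
  forall y, Dm y -> V y * V y = 4 * ((P y - P z) * (P y - P z)) * (P y + 2 * P z).
Proof.
  intros Hz Hv Hf1 y Hy. set (e := P z) in *.
  assert (Hg2 : g2 = 12 * (e * e)).
  { unfold F1 in Hf1. replace g2 with (12 * (e * e) - (12 * (e * e) - g2)) by ring. rewrite Hf1. ring. }
  assert (Hg3 : g3 = -8 * (e * e * e)).
  { pose proof (HQF z Hz) as H. rewrite Hv in H. unfold F in H. fold e in H. rewrite Hg2 in H.
    replace g3 with (0 * 0 + g3) by ring. rewrite H. ring. }
  rewrite (HQF y Hy). unfold F. rewrite Hg2, Hg3. ring.
Qed.

Lemma half_pow_zero a : (0 <= a)%R -> (forall n, a <= (1/2) ^ n)%R -> a = 0%R.
Proof.
  intros Ha H. destruct (Req_dec a 0); auto. exfalso.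
  destruct (pow_lt_1_zero (1/2) ltac:(rewrite Rabs_pos_eq; lra) a ltac:(lra)) as [N HN].
  specialize (HN N (le_n N)). specialize (H N).
  rewrite Rabs_pos_eq in HN. lra. apply pow_le. lra.
Qed.


Lemma mult_closed w : Dm w -> V w = 0 -> F1 (P w) = 0 ->
  (forall rho, (0 < rho)%R -> exists p, (Cmod (p - w) < rho)%R /\ P p = P w) ->
  exists rho, (0 < rho)%R /\ forall y, (Cmod (y - w) < rho)%R -> Dm y /\ P y = P w.
Proof.
  intros Hw Hv Hf1 Hacc.
  set (e := P w) in *.
  destruct (HD w Hw) as [r1 [Hr1 Hb1]].
  destruct (P_cont w Hw 1%R Rlt_0_1) as [d1 [Hd1 Hc1]].
  pose proof (Cmod_ge_0 e) as He.
  set (K := (4 * (3 * Cmod e + 1))%R).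
  assert (HK : (4 <= K)%R) by (unfold K; lra).
  set (R0 := Rmin (Rmin r1 d1) (1 / (4 * (K + 1)))).
  assert (HR0 : (0 < R0)%R).
  { unfold R0. apply Rmin_case. apply Rmin_case; lra. apply Rdiv_lt_0_compat; lra. }
  assert (HR1 : (R0 <= r1)%R) by (unfold R0; eapply Rle_trans; apply Rmin_l).
  assert (HR2 : (R0 <= d1)%R) by (unfold R0; eapply Rle_trans; [apply Rmin_l | apply Rmin_r]).
  assert (HR3 : (R0 <= 1 / (4 * (K + 1)))%R) by (unfold R0; apply Rmin_r).
  assert (HR4 : (16 * (R0 * R0) * K <= 1)%R).
  { assert (R0 * (4 * (K + 1)) <= 1)%R.
    { apply Rmult_le_reg_r with (/ (4 * (K + 1)))%R. apply Rinv_0_lt_compat; lra.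
      rewrite Rmult_assoc, Rinv_r by lra. unfold Rdiv in HR3. lra. }
    nra. }
  assert (Hin : forall y, (Cmod (y - w) < R0)%R -> Dm y /\ (Cmod (P y - e) < 1)%R /\
             (4 * R0 * Cmod (V y) <= Cmod (P y - e))%R).
  { intros y Hy. assert (HDy : Dm y) by (apply Hb1; lra).
    assert (Hu : (Cmod (P y - e) < 1)%R) by (apply Hc1; lra).
    split. exact HDy. split. exact Hu.
    pose proof (mult_formula w Hw Hv Hf1 y HDy) as Hf. fold e in Hf.
    assert (Hpe : (Cmod (P y + 2 * e) <= 3 * Cmod e + 1)%R).
    { replace (P y + 2 * e) with ((P y - e) + 3 * e) by ring.
      eapply Rle_trans. apply Cmod_triangle. rewrite Cmod_mult.
      replace (Cmod 3) with 3%R by (rewrite Cmod_R, Rabs_pos_eq; lra). lra. }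
    apply sq_le. pose proof (Cmod_ge_0 (V y)). nra. apply Cmod_ge_0.
    assert (HV2 : (Cmod (V y) * Cmod (V y) <= K * (Cmod (P y - e) * Cmod (P y - e)))%R).
    { rewrite <- Cmod_mult, Hf, !Cmod_mult.
      replace (Cmod 4) with 4%R by (rewrite Cmod_R, Rabs_pos_eq; lra).
      pose proof (Cmod_ge_0 (P y - e)). pose proof (Cmod_ge_0 (P y + 2 * e)).
      unfold K. assert (0 <= Cmod (P y - e) * Cmod (P y - e))%R by nra. nra. }
    pose proof (Cmod_ge_0 (P y - e)).
    assert (0 <= Cmod (P y - e) * Cmod (P y - e))%R by nra.
    replace (4 * R0 * Cmod (V y) * (4 * R0 * Cmod (V y)))%R
      with (16 * (R0 * R0) * (Cmod (V y) * Cmod (V y)))%R by ring.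
    assert (0 <= 16 * (R0 * R0))%R by nra.
    assert (16 * (R0 * R0) * (Cmod (V y) * Cmod (V y)) <= 16 * (R0 * R0) * (K * (Cmod (P y - e) * Cmod (P y - e))))%R.
    { apply Rmult_le_compat_l; assumption. }
    nra. }
  destruct (Hacc R0 HR0) as [p [Hp Hpe]]. fold e in Hpe.
  assert (Hind : forall n y, (Cmod (y - w) < R0)%R -> (Cmod (P y - e) <= (1/2) ^ n)%R).
  { induction n; intros y Hy.
    - simpl. destruct (Hin y Hy) as [_ [H _]]. lra.
    - assert (Hpt : forall t, (0 <= t <= 1)%R -> (Cmod (p + RtoC t * (y - p) - w) < R0)%R).
      { intros t Ht. apply ball_convex; auto. }
      pose proof (mvi P V p (y - p) 0 0 1 ((1/2)^n / (4 * R0))%R ltac:(lra)) as Hm.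
      assert (Hm' : (Cmod (P (p + RtoC 1 * (y - p)) - P (p + RtoC 0 * (y - p)) - RtoC (1 - 0) * ((y - p) * 0))
         <= (1 - 0) * (Cmod (y - p) * ((1/2)^n / (4 * R0))))%R).
      { apply Hm.
        - intros t Ht. apply P_cont. apply (Hin _ (Hpt t ltac:(lra))).
        - intros t Ht. apply HP. apply (Hin _ (Hpt t ltac:(lra))).
        - intros t Ht. destruct (Hin _ (Hpt t ltac:(lra))) as [_ [_ H3]].
          pose proof (IHn _ (Hpt t ltac:(lra))).
          replace (V (p + RtoC t * (y - p)) - 0) with (V (p + RtoC t * (y - p))) by ring.
          apply Rmult_le_reg_l with (4 * R0)%R. lra.
          replace (4 * R0 * ((1 / 2) ^ n / (4 * R0)))%R with ((1/2)^n)%R by (field; lra). lra. }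
      rewrite seg0, seg1, Hpe in Hm'.
      replace (P y - e - RtoC (1 - 0) * ((y - p) * 0)) with (P y - e) in Hm' by ring.
      assert (Hyp : (Cmod (y - p) < 2 * R0)%R).
      { replace (y - p) with ((y - w) - (p - w)) by ring. eapply Rle_lt_trans. apply Cmod_sub_le. lra. }
      simpl. pose proof (pow_le (1/2) n ltac:(lra)).
      assert (Cmod (y - p) * ((1 / 2) ^ n / (4 * R0)) <= 2 * R0 * ((1 / 2) ^ n / (4 * R0)))%R.
      { apply Rmult_le_compat_r. apply Rdiv_le_0_compat; lra. lra. }
      replace (2 * R0 * ((1 / 2) ^ n / (4 * R0)))%R with (1/2 * (1/2)^n)%R in H0 by (field; lra).
      lra. }
  exists R0. split. exact HR0. intros y Hy. split. apply (Hin y Hy).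
  assert (Cmod (P y - e) = 0)%R.
  { apply half_pow_zero. apply Cmod_ge_0. intros n. apply Hind. exact Hy. }
  apply Cmod_eq_0 in H. replace (P y) with (P y - e + e) by ring. rewrite H. ring.
Qed.


Lemma open_of_balls (U : C -> Prop) :
  (forall y, U y -> exists rho, (0 < rho)%R /\ forall x, (Cmod (x - y) < rho)%R -> U x) -> Copen U.
Proof.
  intros H y Hy. destruct (H y Hy) as [rho [Hrho Hb]].
  assert (Hs : (sqrt 2 < 2)%R).
  { pose proof (sqrt_sqrt 2 ltac:(lra)). pose proof (sqrt_pos 2). nra. }
  assert (Hp : (0 < rho / 2)%R) by lra.
  exists (mkposreal _ Hp). intros x Hx.
  apply C_NormedModule_mixin_compat2 in Hx. simpl in Hx. apply Hb.
  change (minus x y) with (x - y) in Hx. pose proof (sqrt_pos 2). nra.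
Qed.

Hypothesis Hconn : Cconnected Dm.
Hypothesis Hnc : exists z1 z2, Dm z1 /\ Dm z2 /\ P z1 <> P z2.

Lemma no_loc_const : ~ (exists zs rr c, (0 < rr)%R /\ forall y, (Cmod (y - zs) < rr)%R -> Dm y /\ P y = c).
Proof.
  intros [zs [rr [c [Hrr Hc]]]].
  set (U := fun y => exists rho, (0 < rho)%R /\ forall x, (Cmod (x - y) < rho)%R -> Dm x /\ P x = c).
  set (W := fun y => exists rho, (0 < rho)%R /\ forall x, (Cmod (x - y) < rho)%R -> ~ U x).
  assert (HU0 : forall y, U y -> V y = 0 /\ P y = c /\ Dm y).
  { intros y [rho [Hrho Hy]].
    assert (Hyy : (Cmod (y - y) < rho)%R) by (replace (y - y) with (RtoC 0) by ring; rewrite Cmod_R, Rabs_R0; lra).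
    destruct (Hy y Hyy) as [HDy HPy]. split; [|split; auto].
    apply (CD_unique_const P y (V y) c rho Hrho). intros x Hx. apply Hy. exact Hx. apply HP. exact HDy. }
  assert (Hcl : forall w, Dm w -> (forall rho, (0 < rho)%R -> exists y, (Cmod (y - w) < rho)%R /\ U y) -> U w).
  { intros w Hw Hacc.
    assert (Hvw : V w = 0).
    { destruct (Ceq_dec (V w) 0) as [|Hn]; auto. exfalso.
      assert (Hp : (0 < Cmod (V w))%R) by (apply Cmod_gt_0; auto).
      destruct (V_cont w Hw _ Hp) as [d [Hd Hd']].
      destruct (Hacc d Hd) as [y [Hy HUy]]. destruct (HU0 y HUy) as [Hvy _].
      specialize (Hd' y Hy). rewrite Hvy in Hd'. replace (0 - V w) with (- V w) in Hd' by ring.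
      rewrite Cmod_opp in Hd'. lra. }
    assert (Hpw : P w = c).
    { destruct (Ceq_dec (P w - c) 0) as [H0|Hn].
      { replace (P w) with (P w - c + c) by ring. rewrite H0. ring. }
      exfalso.
      assert (Hp : (0 < Cmod (P w - c))%R) by (apply Cmod_gt_0; auto).
      destruct (P_cont w Hw _ Hp) as [d [Hd Hd']].
      destruct (Hacc d Hd) as [y [Hy HUy]]. destruct (HU0 y HUy) as [_ [Hpy _]].
      specialize (Hd' y Hy). rewrite Hpy in Hd'. replace (c - P w) with (- (P w - c)) in Hd' by ring.
      rewrite Cmod_opp in Hd'. lra. }
    destruct (Ceq_dec (F1 (P w)) 0) as [Hf|Hf].
    - destruct (mult_closed w Hw Hvw Hf) as [rho [Hrho Hb]].
      { intros rho Hrho. destruct (Hacc rho Hrho) as [y [Hy HUy]]. exists y. split. exact Hy.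
        destruct (HU0 y HUy) as [_ [Hpy _]]. rewrite Hpy, Hpw. reflexivity. }
      exists rho. split. exact Hrho. intros x Hx. rewrite <- Hpw. apply Hb. exact Hx.
    - destruct (good_exists w Hw Hf) as [r Hg].
      pose proof Hg as [Hr [_ [HDb _]]].
      destruct (dichotomy w r _ Hg Hvw) as [Hi|Hii].
      + exfalso. destruct (Hacc (r / 4)%R ltac:(lra)) as [y [Hy HUy]].
        destruct (HU0 y HUy) as [Hvy _].
        destruct (Ceq_dec y w) as [->|Hne].
        *
          destruct HUy as [rho [Hrho Hb]].
          destruct (Hi (w + RtoC (Rmin rho (r / 4) / 2))).
          { replace (w + RtoC (Rmin rho (r / 4) / 2) - w) with (RtoC (Rmin rho (r / 4) / 2)) by ring.
            rewrite Cmod_R, Rabs_pos_eq. split. apply Rmin_case; lra.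
            pose proof (Rmin_r rho (r / 4)). lra. left. apply Rmin_case; lra. }
          apply (HU0 (w + RtoC (Rmin rho (r / 4) / 2))).
          exists (rho / 2)%R. split. lra. intros x Hx. apply Hb.
          replace (x - w) with ((x - (w + RtoC (Rmin rho (r / 4) / 2))) + RtoC (Rmin rho (r / 4) / 2)) by ring.
          eapply Rle_lt_trans. apply Cmod_triangle. rewrite Cmod_R, Rabs_pos_eq.
          pose proof (Rmin_l rho (r / 4)). lra. left. apply Rmin_case; lra.
        * apply (Hi y). split. apply Cmod_gt_0. intro H0. apply Hne.
          replace y with (y - w + w) by ring. rewrite H0. ring. exact Hy. exact Hvy.
      + exists (3 * r / 8)%R. split. lra. intros x Hx. split. apply HDb. lra.
        rewrite <- Hpw. apply (const_on_ball w (3 * r / 8)%R).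
        intros y Hy. split. apply HDb. lra. apply Hii. exact Hy. exact Hx. }
  assert (Hcover : forall w, Dm w -> U w \/ W w).
  { intros w Hw. destruct (classic (W w)) as [|HnW]; [right; auto|left].
    apply Hcl. exact Hw. intros rho Hrho.
    apply NNPP. intro Hno. apply HnW. exists rho. split. exact Hrho.
    intros x Hx HUx. apply Hno. exists x. split; auto. }
  assert (HoU : Copen U).
  { apply open_of_balls. intros y [rho [Hrho Hy]]. exists (rho / 2)%R. split. lra.
    intros x Hx. exists (rho / 2)%R. split. lra. intros x' Hx'. apply Hy.
    replace (x' - y) with ((x' - x) + (x - y)) by ring. eapply Rle_lt_trans. apply Cmod_triangle. lra. }
  assert (HoW : Copen W).
  { apply open_of_balls. intros y [rho [Hrho Hy]]. exists (rho / 2)%R. split. lra.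
    intros x Hx. exists (rho / 2)%R. split. lra. intros x' Hx'. apply Hy.
    replace (x' - y) with ((x' - x) + (x - y)) by ring. eapply Rle_lt_trans. apply Cmod_triangle. lra. }
  assert (Hzs : U zs) by (exists rr; split; auto).
  destruct (Hconn U W HoU HoW Hcover) as [w [Hw [HUw HWw]]].
  { exists zs. split. apply (HU0 zs Hzs). exact Hzs. }
  { destruct Hnc as [z1 [z2 [H1 [H2 H12]]]].
    destruct (Ceq_dec (P z1) c) as [Hc1|Hc1].
    - exists z2. split. exact H2. destruct (Hcover z2 H2) as [HU2|]; auto.
      exfalso. apply H12. rewrite Hc1. symmetry. apply (HU0 z2 HU2).
    - exists z1. split. exact H1. destruct (Hcover z1 H1) as [HU1|]; auto.
      exfalso. apply Hc1. apply (HU0 z1 HU1). }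
  destruct HWw as [rho [Hrho Hno]]. apply (Hno w). replace (w - w) with (RtoC 0) by ring.
  rewrite Cmod_R, Rabs_R0. exact Hrho. exact HUw.
Qed.

Lemma main_deriv w : Dm w -> CD V w (G (P w)).
Proof.
  intros Hw. destruct (Ceq_dec (V w) 0) as [Hv|Hv].
  2:{ apply noncrit; assumption. }
  destruct (Ceq_dec (F1 (P w)) 0) as [Hf|Hf].
  { apply multroot; assumption. }
  destruct (good_exists w Hw Hf) as [r Hg].
  pose proof Hg as [Hr [_ [HDb _]]].
  destruct (dichotomy w r _ Hg Hv) as [Hi|Hii].
  - eapply simple_deriv; eassumption.
  - exfalso. apply no_loc_const. exists w, (3 * r / 8)%R, (P w). split. lra.
    intros y Hy. split. apply HDb. lra. apply (const_on_ball w (3 * r / 8)%R).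
    intros x Hx. split. apply HDb. lra. apply Hii. exact Hx. exact Hy.
Qed.

End Main.

Lemma CD_shift f z z0 l : CD f (z - z0) l -> CD (fun x => f (x - z0)) z l.
Proof.
  intros H eps He. destruct (H eps He) as [d [Hd H']]. exists d. split. exact Hd.
  intros y Hy. specialize (H' (y - z0)).
  replace (y - z0 - (z - z0)) with (y - z) in H' by ring. apply H'. exact Hy.
Qed.

Lemma open_ball_of (Dm : C -> Prop) : Copen Dm ->
  forall w, Dm w -> exists r, (0 < r)%R /\ forall y, (Cmod (y - w) < r)%R -> Dm y.
Proof.
  intros Ho w Hw. destruct (Ho w Hw) as [eps Heps]. exists eps. split. apply cond_pos.
  intros y Hy. apply Heps. apply C_NormedModule_mixin_compat1. exact Hy.
Qed.

Theorem mainTheorem3 (a0 b0 C0 C1 g3 z0 : C) (D : C -> Prop) (P P' : C -> C) :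
  b0 <> 0 ->
  is_wp_on ((C0 * C0 + 24 * C1 * b0) / (12 * (b0 * b0))) g3 D P P' ->
  let y := fun z => - (C0 / (12 * b0)) + P (z - z0) in
  exists y1 y2 y3 : C -> C,
    forall z, D (z - z0) ->
      Cderiv y z (y1 z) /\ Cderiv y1 z (y2 z) /\ Cderiv y2 z (y3 z) /\
      a0 * y3 z - 12 * a0 * y z * y1 z + b0 * y2 z - (a0 * C0 / b0) * y1 z
        - 6 * b0 * (y z * y z) - C0 * y z + C1 = 0.
Proof.
  intros Hb [Hop [Hcon [Hne [Hder [Hnc Hode]]]]] y.
  set (g2 := (C0 * C0 + 24 * C1 * b0) / (12 * (b0 * b0))) in *.
  assert (HD := open_ball_of D Hop).
  assert (HP : forall w, D w -> CD P w (P' w)) by (intros w Hw; apply Cderiv_CD; auto).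
  exists (fun z => P' (z - z0)), (fun z => G g2 (P (z - z0))),
         (fun z => 12 * P (z - z0) * P' (z - z0)).
  intros z Hz. set (w := z - z0) in *.
  split; [|split; [|split]].
  - apply CD_Cderiv. unfold y.
    apply (CD_val _ _ (0 + P' w)). ring.
    apply (CD_plus (fun _ => - (C0 / (12 * b0))) (fun x => P (x - z0))).
    apply CD_const. apply CD_shift. apply HP. exact Hz.
  - apply CD_Cderiv. apply (CD_shift P'). fold w.
    apply (main_deriv g2 g3 D P P' HD HP Hode Hcon Hnc w Hz).
  - apply CD_Cderiv. apply (CD_shift (fun x => G g2 (P x))). fold w.
    apply (CD_val _ _ (P' w * (12 * P w))). ring.
    apply (CD_comp (G g2) P). apply G_deriv. apply HP. exact Hz.
  - unfold y, G, g2. fold w. field. exact Hb.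
Qed.
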